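(* Let $q$ be an acyclic Boolean conjunctive query. If each cycle in the attack graph of $q$ is terminal, then each cycle in the attack graph of $q$ has length $2$.
   Context: Atoms have variables or constants as arguments; each relation name has a signature $[n,k]$ with primary key positions $1,\dots,k$. $\mathit{key}(F)$ is the set of variables in the primary-key positions of atom $F$, $\mathit{vars}(F)$ its set of variables. A Boolean conjunctive query $q$ is a finite set of atoms; $\mathit{vars}(q)$ its variables. A join tree for $q$ is an undirected tree on the atoms of $q$ such that whenever a variable occurs in atoms $F$ and $G$ it occurs in every atom on the path between them; the edge between $F$ and $G$ is labeled $\mathit{vars}(F)\cap\mathit{vars}(G)$. $q$ is acyclic if it has a join tree. $\mathit{FD}(q)=\{\mathit{key}(F)\to\mathit{vars}(F)\mid F\in q\}$ and $F^{+,q}=\{x\in\mathit{vars}(q)\mid \mathit{FD}(q\setminus\{F\})\models\mathit{key}(F)\to x\}$. The attack graph of $q$, computed from any join tree $\tau$ (independent of the choice), has an edge $F\to G$ for distinct atoms iff every label $L$ on the path between $F$ and $G$ in $\tau$ satisfies $L\not\subseteq F^{+,q}$. A cycle of length $n$ is a sequence of edges $F_0\to\dots\to F_{n-1}\to F_0$ with pairwise distinct $F_i$; it is terminal if there is no edge from a vertex of the cycle to a vertex outside the cycle. *)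

(* Defs.v *)
From mathcomp Require Import all_boot.
Set Implicit Arguments. Unset Strict Implicit. Unset Printing Implicit Defensive.

(* Variables and constants are both encoded by nat;
   a term is [inl x] (variable x) or [inr c] (constant c). *)
Definition var := nat.
Definition term := (var + nat)%type.

Definition atom := (nat * seq term)%type.
Definition rel_of (F : atom) : nat := F.1.
Definition args (F : atom) : seq term := F.2.

(* A signature assigns to each relation name a pair [n, k]:
   arity n, primary key positions 1..k. *)
Definition signature := nat -> nat * nat.

Definition wf_atom (sig : signature) (F : atom) : Prop :=
  size (args F) = (sig (rel_of F)).1 /\ (sig (rel_of F)).2 <= (sig (rel_of F)).1.

Definition vars_of_terms (s : seq term) : seq var :=
  pmap (fun t => if t is inl x then Some x else None) s.

Definition vars (F : atom) : seq var := vars_of_terms (args F).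
Definition key (sig : signature) (F : atom) : seq var :=
  vars_of_terms (take (sig (rel_of F)).2 (args F)).

(* A Boolean conjunctive query: a finite set of atoms (duplicate-free list). *)
Definition query := seq atom.

Definition vars_q (q : query) (x : var) : Prop := exists2 G, G \in q & x \in vars G.

(* FD(q \ {F}) |= key(F) -> x : x lies in every set of variables containing
   key(F) and closed under all FDs key(G) -> vars(G), G in q, G <> F. *)
Definition fd_entails (sig : signature) (q : query) (F : atom) (x : var) : Prop :=
  forall S : var -> Prop,
    (forall y, y \in key sig F -> S y) ->
    (forall G, G \in q -> G != F ->
       (forall y, y \in key sig G -> S y) -> forall y, y \in vars G -> S y) ->
    S x.

Definition Fplus (sig : signature) (q : query) (F : atom) (x : var) : Prop :=
  vars_q q x /\ fd_entails sig q F x.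

Definition simple_path (t : rel atom) (F G : atom) (p : seq atom) : Prop :=
  path t F p /\ last F p = G /\ uniq (F :: p).

Definition is_tree_on (q : query) (t : rel atom) : Prop :=
  (forall F G, t F G -> F \in q /\ G \in q) /\
  (forall F G, t F G = t G F) /\
  (forall F, ~~ t F F) /\
  (forall F G, F \in q -> G \in q ->
     exists p, simple_path t F G p /\ forall p', simple_path t F G p' -> p' = p).

Definition is_join_tree (q : query) (t : rel atom) : Prop :=
  is_tree_on q t /\
  forall F G x p, F \in q -> G \in q -> x \in vars F -> x \in vars G ->
    simple_path t F G p -> forall H, H \in F :: p -> x \in vars H.

Definition acyclic (q : query) : Prop := exists t, is_join_tree q t.

Definition label (H H' : atom) (x : var) : bool := (x \in vars H) && (x \in vars H').

Definition attacks (sig : signature) (q : query) (t : rel atom) (F G : atom) : Prop :=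
  F \in q /\ G \in q /\ F <> G /\
  forall p, simple_path t F G p ->
    forall i, i < size p ->
      ~ (forall x, label (nth F (F :: p) i) (nth F (F :: p) i.+1) x -> Fplus sig q F x).

(* A cycle F_0 -> ... -> F_{n-1} -> F_0 with pairwise distinct F_i;
   represented by the nonempty list [F_0; ...; F_{n-1}]; its length is n. *)
Definition is_cycle (E : atom -> atom -> Prop) (c : seq atom) : Prop :=
  0 < size c /\ uniq c /\
  forall i, i < size c -> E (nth (head (0, [::]) c) c i)
                            (nth (head (0, [::]) c) c ((i.+1) %% size c)).

Definition terminal (E : atom -> atom -> Prop) (c : seq atom) : Prop :=
  forall F G, F \in c -> E F G -> G \in c.

(* Main.v *)
Require Import Defs.
From mathcomp Require Import all_boot.
From Stdlib Require Import Classical.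
Set Implicit Arguments. Unset Strict Implicit. Unset Printing Implicit Defensive.

Definition pairb (u x a b : atom) : bool := ((u == a) && (x == b)) || ((u == b) && (x == a)).
Fixpoint edgb (u : atom) (w : seq atom) (a b : atom) : bool :=
  if w is x :: w' then pairb u x a b || edgb x w' a b else false.

Lemma pairbC u x a b : pairb u x a b = pairb u x b a.
Proof. by rewrite /pairb orbC. Qed.
Lemma pairb_swap u x a b : pairb x u a b = pairb u x a b.
Proof. rewrite /pairb. by case: (x == a); case: (u==b); case: (x==b); case: (u==a). Qed.
Lemma edgbC u w a b : edgb u w a b = edgb u w b a.
Proof. elim: w u => //= x w IH u; by rewrite pairbC IH. Qed.
Lemma edgb_cat u w1 w2 a b : edgb u (w1 ++ w2) a b = edgb u w1 a b || edgb (last u w1) w2 a b.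
Proof. elim: w1 u => //= x w IH u; by rewrite IH orbA. Qed.
Lemma edgb_rcons u w x a b : edgb u (rcons w x) a b = edgb u w a b || pairb (last u w) x a b.
Proof. by rewrite -cats1 edgb_cat /= orbF. Qed.
Lemma last_rev_belast (x : atom) w : last (last x w) (rev (belast x w)) = x.
Proof. case: w => //= y w. by rewrite rev_cons last_rcons. Qed.
Lemma edgb_rev u w a b : edgb (last u w) (rev (belast u w)) a b = edgb u w a b.
Proof.
elim: w u => //= x w IH u.
by rewrite rev_cons edgb_rcons IH last_rev_belast pairb_swap orbC.
Qed.
Lemma edgb_mem u w a b : edgb u w a b -> (a \in u :: w) && (b \in u :: w).
Proof.
elim: w u => //= x w IH u /orP[|/IH].
- rewrite /pairb => /orP[]/andP[/eqP<- /eqP<-]; by rewrite !inE !eqxx ?orbT.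
- rewrite !inE => /andP[-> ->]; by rewrite !orbT.
Qed.
Lemma edgb_nth d u w a b : edgb u w a b <->
  exists2 i, i < size w & pairb (nth d (u::w) i) (nth d (u::w) i.+1) a b.
Proof.
elim: w u => [|x w IH] u /=; first by split => // -[].
split.
- case/orP => [H|/IH [i Hi H]]; first by exists 0.
  by exists i.+1.
- case => -[|i] /= Hi H; first by rewrite H.
  by apply/orP; right; apply/IH; exists i.
Qed.

Lemma label_sym a b x : label a b x = label b a x.
Proof. by rewrite /label andbC. Qed.

Lemma attacks_edge sig q t F G p a b : attacks sig q t F G -> simple_path t F G p ->
  edgb F p a b -> ~ (forall x, label a b x -> Fplus sig q F x).
Proof.
move=> [_ [_ [_ H]]] sp /(edgb_nth F) [i Hi Hp] Hl.
apply: (H p sp i Hi) => x.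
move: Hp; rewrite /pairb => /orP[]/andP[/eqP-> /eqP->]; first exact: Hl.
rewrite label_sym; exact: Hl.
Qed.

Lemma edge_attacks sig q t F G : F \in q -> G \in q -> F <> G ->
  (forall p, simple_path t F G p -> forall a b, edgb F p a b ->
     ~ (forall x, label a b x -> Fplus sig q F x)) -> attacks sig q t F G.
Proof.
move=> Fq Gq FG H; do 3 split => //.
move=> p sp i Hi; apply: (H p sp (nth F (F :: p) i) (nth F (F :: p) i.+1)).
apply/(edgb_nth F); exists i => //; by rewrite /pairb !eqxx.
Qed.

Lemma path_sub (P : rel atom) (t : rel atom) u w : path t u w ->
  (forall a b, edgb u w a b -> P a b) -> path (fun a b => t a b && P a b) u w.
Proof.
elim: w u => //= x w IH u /andP[tux pw] HP.
rewrite tux HP /=; last by rewrite /pairb !eqxx.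
apply: IH => // a b H; apply: HP; by rewrite H orbT.
Qed.

Lemma path_edgb (R : rel atom) u w a b : path R u w -> edgb u w a b -> R a b || R b a.
Proof.
elim: w u => //= x w IH u /andP[Rux pw] /orP[|/IH]; last exact.
by rewrite /pairb => /orP[]/andP[/eqP<- /eqP<-]; rewrite Rux ?orbT.
Qed.

Lemma walk_edges q t u v w p a b : is_tree_on q t -> u \in q -> v \in q ->
  path t u w -> last u w = v -> simple_path t u v p -> edgb u p a b -> edgb u w a b.
Proof.
move=> [_ [_ [_ Huniq]]] uq vq tw lw [tp [lp up]] e.
have Rw := path_sub (P := edgb u w) tw (fun a b H => H).
move: lw; case: (shortenP Rw) => p' Rp' up' _ lw'.
have tp' : path t u p' by apply: sub_path Rp' => x y /andP[].
have [p0 [_ Hp0]] := Huniq u v uq vq.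
have e' : edgb u p' a b.
  by rewrite (Hp0 p' (conj tp' (conj lw' up'))) -(Hp0 p (conj tp (conj lp up))).
case/orP: (path_edgb Rp' e') => /andP[_] //; by rewrite edgbC.
Qed.

Lemma path_in_q q t u w : is_tree_on q t -> u \in q -> path t u w ->
  forall z, z \in u :: w -> z \in q.
Proof.
move=> [tq _] uq; elim: w u uq => [|x w IH] u uq /=.
  by move=> _ z; rewrite inE => /eqP->.
move=> /andP[tux pw] z; rewrite inE => /orP[/eqP->//|]; apply: IH => //.
by case: (tq _ _ tux).
Qed.

Lemma sp_refl t u p : simple_path t u u p -> p = [::].
Proof.
case: p => // x p [_ [l /andP[nu _]]].
have : last u (x :: p) \in x :: p by rewrite /= mem_last.
by rewrite l (negbTE nu).
Qed.

Lemma sp_rev q t u v p : is_tree_on q t -> simple_path t u v p ->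
  simple_path t v u (rev (belast u p)).
Proof.
move=> [_ [tsym _]] [tp [lp up]]; rewrite -lp; split; last split.
- rewrite rev_path; apply: sub_path tp => x y; by rewrite /= tsym.
- exact: last_rev_belast.
- by rewrite -rev_rcons -lastI rev_uniq.
Qed.

Lemma prefix_walk (t : rel atom) u p v : path t u p -> v \in u :: p ->
  exists w, [/\ path t u w, last u w = v & forall a b, edgb u w a b -> edgb u p a b].
Proof.
move=> tp; rewrite inE => /orP[/eqP->|vp]; first by exists [::].
move: tp; case/splitPr: vp => p1 p2 tp.
exists (rcons p1 v); split.
- by move: tp; rewrite -cat_rcons cat_path => /andP[].
- by rewrite last_rcons.
- by move=> a b H; rewrite -cat_rcons edgb_cat H.
Qed.

Lemma key_sub_vars sig F y : y \in key sig F -> y \in vars F.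
Proof. by rewrite /key /vars /vars_of_terms !mem_pmap map_take => /mem_take. Qed.

Lemma Fplus_key sig q F y : F \in q -> y \in key sig F -> Fplus sig q F y.
Proof.
move=> Fq yk; split; first by exists F => //; exact: key_sub_vars yk.
by move=> S0 H _; exact: H.
Qed.

Lemma Fplus_closed sig q F K : K \in q -> K != F ->
  (forall y, y \in key sig K -> Fplus sig q F y) -> forall y, y \in vars K -> Fplus sig q F y.
Proof.
move=> Kq KF Hk y yv; split; first by exists K.
move=> S0 HkF Hcl; apply: (Hcl K Kq KF) => // y' Hy'.
by case: (Hk y' Hy') => _ /(_ S0 HkF Hcl).
Qed.

Lemma tri sig q t F G H :
  is_join_tree q t -> F <> H ->
  attacks sig q t F G -> attacks sig q t G H -> ~ attacks sig q t F H ->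
  attacks sig q t G F.
Proof.
move=> jt FH aFG aGH naFH.
have [tr jprop] := jt.
have [tq [tsym [tirr tuniq]]] := tr.
have [Fq [Gq [FG _]]] := aFG.
have [_ [Hq [GH _]]] := aGH.
have [pFG [spFG uFG]] := tuniq F G Fq Gq.
have [pGH [spGH uGH]] := tuniq G H Gq Hq.
have [pFH [spFH uFH]] := tuniq F H Fq Hq.
have [A [B [eAB LAB]]] : exists A B, edgb F pFH A B /\
    (forall x, label A B x -> Fplus sig q F x).
  apply: NNPP => Hn; apply: naFH; apply: edge_attacks => // p sp a b e Hl.
  apply: Hn; exists a, b; split => //; by rewrite -(uFH p sp).
have eGH : edgb G pGH A B.
  have [tpFG [lFG _]] := spFG; have [tpGH [lGH _]] := spGH.
  have : edgb F (pFG ++ pGH) A B.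
    apply: (walk_edges tr Fq Hq _ _ spFH eAB).
      by rewrite cat_path tpFG lFG.
    by rewrite last_cat lFG.
  rewrite edgb_cat lFG => /orP[e|//].
  by case: (attacks_edge aFG spFG e LAB).
have [x [lx [Fx nGx]]] : exists x, label A B x /\ Fplus sig q F x /\ ~ Fplus sig q G x.
  apply: NNPP => Hn; apply: (attacks_edge aGH spGH eGH) => x lx.
  apply: NNPP => nG; apply: Hn; exists x; split => //; split => //; exact: LAB.
have key0 : ~ (forall y, y \in key sig G -> Fplus sig q F y).
  move=> Hk; clear uFG; have [_ [lFG _]] := spFG.
  move: lFG spFG; case/lastP: pFG => [|p0 g] /=; first by move=> E; case: FG.
  rewrite last_rcons => gG sp; subst g.
  have e : edgb F (rcons p0 G) (last F p0) G by rewrite edgb_rcons /pairb !eqxx orbT.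
  apply: (attacks_edge aFG sp e) => y /andP[_ yG].
  apply: (Fplus_closed Gq _ Hk yG); apply/eqP => E; exact: FG (esym E).
apply: edge_attacks => // [|p spGF C D eCD LCD]; first by move=> E; exact: FG (esym E).
have spr := sp_rev tr spGF.
have eCDr : edgb F (rev (belast G p)) C D.
  have [_ [lGF _]] := spGF; by rewrite -lGF edgb_rev.
pose side J := J \in q /\ forall pJ, simple_path t F J pJ -> ~~ edgb F pJ C D.
pose S z := Fplus sig q F z /\ (Fplus sig q G z \/ exists J, side J /\ z \in vars J).
have sideF : side F.
  split => // pJ sp; by rewrite (sp_refl sp).
have Sx : S x.
  case: Fx => _; apply.
  - move=> y yk; split; first exact: Fplus_key.
    right; exists F; split => //; exact: key_sub_vars yk.
  - move=> K Kq KF HS y yK; split.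
      by apply: (Fplus_closed Kq KF) => // y' hy'; case: (HS y' hy').
    case: (eqVneq K G) => [EK|KG].
      by exfalso; apply: key0 => y' hy'; rewrite -EK in hy'; case: (HS y' hy').
    case: (classic (side K)) => [sK|nsK]; first by right; exists K.
    left; apply: (Fplus_closed Kq KG) => // y' hy'.
    case: (HS y' hy') => _ [//|[J [[Jq sJ] yJ]]].
    have [pK [spK _]] := tuniq F K Fq Kq.
    have eK : edgb F pK C D.
      apply: NNPP => ne; apply: nsK; split => // pJ sp.
      have [p1 [_ u1]] := tuniq F K Fq Kq.
      rewrite (u1 _ sp) -(u1 _ spK); by apply/negP.
    have [pJ [spJ _]] := tuniq F J Fq Jq.
    have [pJK [spJK _]] := tuniq J K Jq Kq.
    have : edgb F (pJ ++ pJK) C D.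
      have [tpJ [lJ _]] := spJ; have [tpJK [lJK _]] := spJK.
      apply: (walk_edges tr Fq Kq _ _ spK eK).
        by rewrite cat_path tpJ lJ.
      by rewrite last_cat lJ.
    rewrite edgb_cat; have [_ [lJ _]] := spJ; rewrite lJ.
    case/orP => [e|e]; first by move: (sJ _ spJ); rewrite e.
    apply: LCD; move: (edgb_mem e) => /andP[Cm Dm].
    have yK' := key_sub_vars hy'.
    by rewrite /label (jprop J K y' pJK Jq Kq yJ yK' spJK C Cm) (jprop J K y' pJK Jq Kq yJ yK' spJK D Dm).
case: Sx => _ [//|[J [[Jq sJ] xJ]]].
have [tpGH [lGH _]] := spGH.
have Aq : A \in q.
  move: (edgb_mem eGH) => /andP[Am _]; exact: (path_in_q tr Gq tpGH).
have [pFA [spFA _]] := tuniq F A Fq Aq.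
have eFA : edgb F pFA C D.
  apply/negPn/negP => ne.
  have [pAG [spAG _]] := tuniq A G Aq Gq.
  have : edgb F (pFA ++ pAG) C D.
    have [tpFA [lFA _]] := spFA; have [tpAG [lAG _]] := spAG.
    apply: (walk_edges tr Fq Gq _ _ spr eCDr).
      by rewrite cat_path tpFA lFA.
    by rewrite last_cat lFA.
  rewrite edgb_cat; have [_ [lFA _]] := spFA; rewrite lFA (negbTE ne) /= => e.
  have spGA := sp_rev tr spAG.
  have eGA : edgb G (rev (belast A pAG)) C D.
    have [_ [lAG _]] := spAG; by rewrite -{1}lAG edgb_rev.
  move: (edgb_mem eGH) => /andP[Am _].
  have [w [tw lw sw]] := prefix_walk tpGH Am.
  have := sw _ _ (walk_edges tr Gq Aq tw lw spGA eGA).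
  by move=> e2; apply: (attacks_edge aGH spGH e2 LCD).
have [pJA [spJA _]] := tuniq J A Jq Aq.
have [pJ [spJ _]] := tuniq F J Fq Jq.
have : edgb F (pJ ++ pJA) C D.
  have [tpJ [lJ _]] := spJ; have [tpJA [lJA _]] := spJA.
  apply: (walk_edges tr Fq Aq _ _ spFA eFA).
    by rewrite cat_path tpJ lJ.
  by rewrite last_cat lJ.
rewrite edgb_cat; have [_ [lJ _]] := spJ; rewrite lJ.
case/orP => [e|e]; first by move: (sJ _ spJ); rewrite e.
apply: nGx; apply: LCD; move: (edgb_mem e) => /andP[Cm Dm].
move: lx => /andP[xA _].
by rewrite /label (jprop J A x pJA Jq Aq xJ xA spJA C Cm) (jprop J A x pJA Jq Aq xJ xA spJA D Dm).
Qed.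
Unset Implicit Arguments.

Theorem lemma6 (sig : signature) (q : query) (t : rel atom) :
  uniq q ->
  (forall F, F \in q -> wf_atom sig F) ->
  is_join_tree q t ->
  (forall c, is_cycle (attacks sig q t) c -> terminal (attacks sig q t) c) ->
  forall c, is_cycle (attacks sig q t) c -> size c = 2.
Proof.
move=> uq wf jt term c [n0 [uc Ec]].
case: c n0 uc Ec => [//|a [|b [|e r]]] _ uc Ec //.
  by have := Ec 0 isT; rewrite /= ?modnn /= => -[_ [_ []]].
exfalso.
have Eab : attacks sig q t a b by have := Ec 0 isT; rewrite /= ?modn_small.
have Ebe : attacks sig q t b e by have := Ec 1 isT; rewrite /= ?modn_small.
move: uc; rewrite /= !inE !negb_or => /andP[/and3P[ab ae ar] /andP[/andP[be br] /andP[er ur]]].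
case: (classic (attacks sig q t a e)) => [Eae|nEae].
- have cyc : is_cycle (attacks sig q t) [:: a, e & r].
    split => //; split; first by rewrite /= inE negb_or ae ar er.
    move=> [|i] Hi; first by rewrite /= ?modn_small.
    have := Ec i.+2 Hi.
    rewrite /=.
    case: (ltnP i (size r)) => Hir.
      by rewrite !modn_small.
    have Ei : i = size r by apply/eqP; rewrite eqn_leq Hir andbT -ltnS; exact: Hi.
    by rewrite Ei !modnn.
  have := term _ cyc a b; rewrite !inE eqxx => /(_ isT Eab).
  by rewrite eq_sym (negbTE ab) (negbTE be) (negbTE br).
- have aeP : a <> e by move=> E; move: ae; rewrite E eqxx.
  have Eba := tri jt aeP Eab Ebe nEae.
  have cyc : is_cycle (attacks sig q t) [:: a; b].
    split => //; split; first by rewrite /= inE ab.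
    by move=> [|[|i]] Hi //=; rewrite ?modn_small ?modnn.
  have := term _ cyc b e; rewrite !inE eqxx orbT => /(_ isT Ebe).
  by rewrite eq_sym (negbTE ae) eq_sym (negbTE be).
Qed.
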